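(* Let $P, Q \subseteq \mathbb{R}^d$ be rational polytopes such that for every integer vector $w \in \mathbb{Z}^d$ and every real $s > 0$ we have $L_{P + w}(s) = L_{Q + w}(s)$. Then $P = Q$.
   Context: For a polytope $P \subseteq \mathbb{R}^d$ and real $s \ge 0$, the real Ehrhart function is $L_P(s) = \#(sP \cap \mathbb{Z}^d)$, where $sP = \{sx : x \in P\}$. A rational polytope is the convex hull of finitely many points of $\mathbb{Q}^d$. *)

(* Defs.v *)
From mathcomp Require Import ssreflect ssrfun ssrbool eqtype ssrnat seq fintype finfun.
From Stdlib Require Import Reals QArith Qreals ZArith List.

Set Implicit Arguments.
Unset Strict Implicit.

Open Scope R_scope.

Definition point (d : nat) := 'I_d -> R.
Definition region (d : nat) := point d -> Prop.

Definition lattice_pt (d : nat) := {ffun 'I_d -> Z}.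

Definition fsum (n : nat) (f : nat -> R) : R :=
  List.fold_right Rplus 0 (List.map f (List.seq 0 n)).

Definition conv_hull (d : nat) (V : list (point d)) : region d :=
  fun x => exists c : nat -> R,
    (forall k, (k < List.length V)%coq_nat -> 0 <= c k) /\
    fsum (List.length V) c = 1 /\
    forall i : 'I_d,
      x i = fsum (List.length V) (fun k => c k * List.nth k V (fun _ => 0) i).

Definition rational_point (d : nat) (v : point d) : Prop :=
  forall i : 'I_d, exists q : Q, v i = Q2R q.

Definition rational_polytope (d : nat) (P : region d) : Prop :=
  exists V : list (point d),
    (forall v, List.In v V -> rational_point v) /\
    (forall x, P x <-> conv_hull V x).

Definition translate (d : nat) (P : region d) (w : lattice_pt d) : region d :=
  fun x => P (fun i => x i - IZR (w i)).

Definition dilate_lattice (d : nat) (P : region d) (s : R) : lattice_pt d -> Prop :=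
  fun z => exists y : point d, P y /\ forall i : 'I_d, IZR (z i) = s * y i.

Definition has_card (d : nat) (A : lattice_pt d -> Prop) (n : nat) : Prop :=
  exists l : list (lattice_pt d),
    List.NoDup l /\ (forall z, List.In z l <-> A z) /\ List.length l = n.

Definition ehrhart_value (d : nat) (P : region d) (s : R) (n : nat) : Prop :=
  has_card (dilate_lattice P s) n.

(* Main.v *)
Require Import Defs.
From mathcomp Require Import ssreflect ssrfun ssrbool eqtype ssrnat seq fintype finfun.
From Stdlib Require Import Reals QArith Qreals ZArith List Lra Lia.
Open Scope R_scope.

Lemma fsum_S n f : fsum (S n) f = f 0%nat + fsum n (fun k => f (S k)).
Proof. rewrite /fsum /= -List.seq_shift List.map_map //. Qed.

Lemma fsum_ext n f g : (forall k, (k < n)%coq_nat -> f k = g k) -> fsum n f = fsum n g.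
Proof.
elim: n f g => [|n IH] f g H; first by [].
rewrite !fsum_S H; last lia. f_equal. apply IH => k hk; apply H; lia.
Qed.

Lemma fsum_plus n f g : fsum n (fun k => f k + g k) = fsum n f + fsum n g.
Proof. elim: n f g => [|n IH] f g /=; first (rewrite /fsum /=; lra).
rewrite !fsum_S IH; lra. Qed.

Lemma fsum_scal n c f : fsum n (fun k => c * f k) = c * fsum n f.
Proof. elim: n f => [|n IH] f; first (rewrite /fsum /=; lra).
rewrite !fsum_S IH; lra. Qed.

Lemma fsum_le n f g : (forall k, (k < n)%coq_nat -> f k <= g k) -> fsum n f <= fsum n g.
Proof.
elim: n f g => [|n IH] f g H; first (rewrite /fsum /=; lra).
rewrite !fsum_S. have := H 0%nat ltac:(lia). have := IH (fun k => f (S k)) (fun k => g (S k)) ltac:(move=> k hk; apply H; lia). lra.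
Qed.

Lemma fsum_abs n f : Rabs (fsum n f) <= fsum n (fun k => Rabs (f k)).
Proof.
elim: n f => [|n IH] f; first (rewrite /fsum /= Rabs_R0; lra).
rewrite !fsum_S. have := IH (fun k => f (S k)). have := Rabs_triang (f 0%nat) (fsum n (fun k => f (S k))). lra.
Qed.

Lemma fsum_nonneg n f : (forall k, (k < n)%coq_nat -> 0 <= f k) -> 0 <= fsum n f.
Proof. move=> H. have := fsum_le n (fun _ => 0) f H.
rewrite (fsum_ext n (fun _ => 0) (fun k => 0 * 0)); last (move=> *; lra).
rewrite (fsum_scal n 0 (fun _ => 0)). lra. Qed.

Lemma fsum_ge_term n f j : (forall k, (k < n)%coq_nat -> 0 <= f k) -> (j < n)%coq_nat -> f j <= fsum n f.
Proof.
elim: n f j => [|n IH] f j H hj; first lia.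
rewrite fsum_S. case: j hj => [|j] hj.
- have := fsum_nonneg n (fun k => f (S k)) ltac:(move=> k hk; apply H; lia). lra.
- have := IH (fun k => f (S k)) j ltac:(move=> k hk; apply H; lia) ltac:(lia). have := H 0%nat ltac:(lia). lra.
Qed.

Lemma fsum_zero_nonneg n c u : (forall k, (k < n)%coq_nat -> 0 <= c k) -> fsum n c = 0 ->
  fsum n (fun k => c k * u k) = 0.
Proof.
elim: n c u => [|n IH] c u H; first by [].
rewrite !fsum_S => hs.
have h1 := fsum_nonneg n (fun k => c (S k)) ltac:(move=> k hk; apply H; lia).
have h0 := H 0%nat ltac:(lia).
have e0 : c 0%nat = 0 by lra.
rewrite e0 (IH (fun k => c (S k)) (fun k => u (S k))); [lra| move=> k hk; apply H; lia | lra].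
Qed.

Lemma fsum_delta n j g : (j < n)%coq_nat ->
  fsum n (fun k => (if Nat.eq_dec k j then 1 else 0) * g k) = g j.
Proof.
elim: n j g => [|n IH] j g hj; first lia.
rewrite fsum_S. case: j hj => [|j] hj.
- rewrite (fsum_ext n _ (fun k => 0 * g (S k))).
  + rewrite fsum_scal. destruct (Nat.eq_dec 0 0); [simpl; lra|lia].
  + move=> k _. destruct (Nat.eq_dec (S k) 0); [lia|simpl; lra].
- rewrite (fsum_ext n _ (fun k => (if Nat.eq_dec k j then 1 else 0) * g (S k))).
  + rewrite IH; last lia. destruct (Nat.eq_dec 0 (S j)); [lia|simpl; lra].
  + move=> k _. destruct (Nat.eq_dec (S k) (S j)); destruct (Nat.eq_dec k j); try lia; simpl; lra.
Qed.
From Stdlib Require Import FunctionalExtensionality Classical ClassicalEpsilon.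

Section H.
Variable d : nat.
Notation nthv V k := (List.nth k V (fun _ : 'I_d => 0)).

Lemma hull_vertex (V : list (point d)) j : (j < List.length V)%coq_nat -> conv_hull V (nthv V j).
Proof.
move=> hj. exists (fun k => if Nat.eq_dec k j then 1 else 0). split; [|split].
- move=> k _. destruct (Nat.eq_dec k j); simpl; lra.
- rewrite (fsum_ext _ _ (fun k => (if Nat.eq_dec k j then 1 else 0) * 1)); last (move=> *; lra).
  by rewrite fsum_delta.
- move=> i. by rewrite fsum_delta.
Qed.

Lemma hull_convex (W : list (point d)) a b t : conv_hull W a -> conv_hull W b -> 0 <= t <= 1 ->
  conv_hull W (fun i => t * a i + (1 - t) * b i).
Proof.
move=> [c [hc [sc ec]]] [c' [hc' [sc' ec']]] ht.
exists (fun k => t * c k + (1 - t) * c' k). split; [|split].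
- move=> k hk. have := hc k hk. have := hc' k hk. nra.
- rewrite fsum_plus (fsum_scal _ t c) (fsum_scal _ (1-t) c') sc sc'. lra.
- move=> i. rewrite ec ec' -(fsum_scal _ t) -(fsum_scal _ (1-t)) -fsum_plus.
  apply fsum_ext => k _. lra.
Qed.

Lemma hull_sub (W V : list (point d)) : (forall v, List.In v V -> conv_hull W v) ->
  forall x, conv_hull V x -> conv_hull W x.
Proof.
elim: V => [|v V IH] HV x [c [hc [sc ec]]].
- rewrite /fsum /= in sc. lra.
- simpl in sc, ec. rewrite fsum_S in sc.
  have hr := fsum_nonneg (List.length V) (fun k => c (S k)) ltac:(move=> k hk; apply hc; simpl; lia).
  have h0 := hc 0%nat ltac:(simpl; lia).
  have hvW : conv_hull W v by apply HV; left.
  case: (Req_dec (c 0%nat) 1) => e0.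
  + have -> : x = v; last done.
    apply functional_extensionality => i. rewrite ec fsum_S /=.
    rewrite (fsum_zero_nonneg _ (fun k => c (S k)) (fun k => nthv V k i)).
    * rewrite e0. lra.
    * move=> k hk; apply hc; simpl; lia.
    * lra.
  + pose y := fun i => fsum (List.length V) (fun k => c (S k) / (1 - c 0%nat) * nthv V k i).
    have hy : conv_hull V y.
    { exists (fun k => c (S k) / (1 - c 0%nat)). split; [|split].
      - move=> k hk. have := hc (S k) ltac:(simpl; lia). move=> h.
        apply Rmult_le_pos => //. apply Rlt_le, Rinv_0_lt_compat. lra.
      - rewrite (fsum_ext _ _ (fun k => / (1 - c 0%nat) * c (S k))); last (move=> *; rewrite /Rdiv; lra).
        rewrite fsum_scal. have -> : fsum (List.length V) (fun k => c (S k)) = 1 - c 0%nat by lra.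
        field. lra.
      - by []. }
    have hyW := IH ltac:(move=> u hu; apply HV; right; done) y hy.
    have := hull_convex W v y (c 0%nat) hvW hyW ltac:(lra).
    have -> : (fun i => c 0%nat * v i + (1 - c 0%nat) * y i) = x; last done.
    apply functional_extensionality => i. rewrite ec fsum_S /= /y -fsum_scal.
    f_equal. apply fsum_ext => k _. field. lra.
Qed.
End H.
Section B.
Variable d : nat.

Lemma unif_bound (F : 'I_d -> R -> Prop) :
  (forall i M M', M <= M' -> F i M -> F i M') -> (forall i, exists M, F i M) ->
  exists M, forall i, F i M.
Proof.
move=> mono ex.
suff H : forall l : list 'I_d, exists M, forall i, i \in l -> F i M.
{ have [M HM] := H (ord_enum d). exists M => i. apply HM. by rewrite mem_ord_enum. }
elim => [|a l [Ml HMl]]; first by exists 0.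
have [Ma HMa] := ex a. exists (Rmax Ma Ml) => i. rewrite seq.in_cons => /orP [/eqP -> | hi].
- apply: mono (HMa). apply Rmax_l.
- apply: mono (HMl i hi). apply Rmax_r.
Qed.

Lemma unif_den (G : 'I_d -> Z -> Prop) :
  (forall i m k, (0 < k)%Z -> G i m -> G i (m * k)%Z) -> (forall i, exists m, (0 < m)%Z /\ G i m) ->
  exists m, (0 < m)%Z /\ forall i, G i m.
Proof.
move=> mono ex.
suff H : forall l : list 'I_d, exists m, (0 < m)%Z /\ forall i, i \in l -> G i m.
{ have [m [hm HM]] := H (ord_enum d). exists m; split => // i. apply HM. by rewrite mem_ord_enum. }
elim => [|a l [ml [hml HMl]]]; first by exists 1%Z.
have [ma [hma HMa]] := ex a. exists (ma * ml)%Z; split; first lia.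
move=> i. rewrite seq.in_cons => /orP [/eqP -> | hi].
- by apply mono.
- rewrite Z.mul_comm. by apply mono; last apply HMl.
Qed.

Lemma hull_bound (W : list (point d)) : exists M, forall x i, conv_hull W x -> Rabs (x i) <= M.
Proof.
suff ex : forall i, exists M, forall x, conv_hull W x -> Rabs (x i) <= M.
{ have [M HM] := unif_bound (fun i M => forall x, conv_hull W x -> Rabs (x i) <= M)
    ltac:(move=> i M M' h H x hx; have := H x hx; lra) ex.
  exists M => x i; apply HM. }
move=> i. exists (fsum (List.length W) (fun k => Rabs (List.nth k W (fun _ => 0) i))).
move=> x [c [hc [sc ec]]]. rewrite ec.
apply: Rle_trans (fsum_abs _ _) _.
set Mi := fsum (List.length W) (fun k => Rabs (List.nth k W (fun _ => 0) i)).
apply: (Rle_trans _ (fsum (List.length W) (fun k => Mi * c k))).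
- apply fsum_le => k hk. rewrite Rabs_mult (Rabs_pos_eq _ (hc k hk)).
  have := fsum_ge_term (List.length W) (fun k => Rabs (List.nth k W (fun _ => 0) i)) k
    ltac:(move=> *; apply Rabs_pos) hk.
  have := hc k hk. rewrite -/Mi. nra.
- rewrite fsum_scal sc. lra.
Qed.

Lemma common_den (v : point d) : rational_point v ->
  exists m (a : lattice_pt d), (0 < m)%Z /\ forall i, v i * IZR m = IZR (a i).
Proof.
move=> hv.
have mono : forall i m k, (0 < k)%Z -> (exists z, v i * IZR m = IZR z) -> exists z, v i * IZR (m * k) = IZR z.
{ move=> i m k hk [z hz]. exists (z * k)%Z. rewrite !mult_IZR -hz. lra. }
have ex : forall i, exists m, (0 < m)%Z /\ exists z, v i * IZR m = IZR z.
{ move=> i. have [q hq] := hv i. exists (Z.pos (Qden q)). split; first lia.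
  exists (Qnum q). rewrite hq /Q2R. field. apply not_0_IZR. lia. }
have [m [hm Hm]] := unif_den (fun i m => exists z, v i * IZR m = IZR z) mono ex.
exists m. have H : forall i, {z | v i * IZR m = IZR z}.
{ move=> i. apply constructive_indefinite_description. apply Hm. }
exists [ffun i => proj1_sig (H i)]. split => // i. rewrite ffunE. exact: proj2_sig (H i).
Qed.
End B.
Section K.
Variable d : nat.

Lemma key (P Q : region d) (v : point d) (m : Z) (a : lattice_pt d) (MP MQ : R) :
  P v -> ~ Q v -> (0 < m)%Z -> (forall i, v i * IZR m = IZR (a i)) ->
  (forall i, Rabs (v i) <= MP) -> (forall y i, Q y -> Rabs (y i) <= MQ) ->
  exists (w : lattice_pt d) s, 0 < s /\ dilate_lattice (translate P w) s a /\
    forall z, ~ dilate_lattice (translate Q w) s z.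
Proof.
move=> Pv nQv hm Ha HP HQ.
set k := up (Rabs (MP + MQ)).
have [hk _] := archimed (Rabs (MP + MQ)).
have hk0 : 0 < IZR k by have := Rabs_pos (MP + MQ); rewrite -/k in hk; lra.
rewrite -/k in hk.
have hmR : 0 < IZR m by apply IZR_lt.
set mR := IZR m in hmR Ha *. set kR := IZR k in hk hk0 *.
set NR := mR * kR + 1.
have hN : 0 < NR by rewrite /NR; nra.
set s := mR / NR.
have hs : 0 < s by rewrite /s; apply Rdiv_lt_0_compat.
pose w : lattice_pt d := [ffun i => (k * a i)%Z].
have hv : forall i, v i = IZR (a i) * NR / mR - IZR (w i).
{ move=> i. rewrite ffunE mult_IZR -/kR -Ha /NR. field. lra. }
exists w, s. split => //. split.
- exists (fun i => IZR (a i) * NR / mR). split.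
  + rewrite /translate. have -> : (fun i => IZR (a i) * NR / mR - IZR (w i)) = v; last done.
    apply functional_extensionality => i. by rewrite hv.
  + move=> i. rewrite /s. field. lra.
- move=> z [y [Qy Hz]]. rewrite /translate in Qy.
  have hy : forall i, y i = IZR (z i) * NR / mR.
  { move=> i. rewrite Hz /s. field. lra. }
  case: (classic (exists i, z i <> a i)) => [[i hi] | hno].
  + have h1 := HQ _ i Qy. have h2 := HP i. simpl in h1.
    set u := y i - IZR (w i) in h1.
    have e : u - v i = IZR (z i - a i) * (NR / mR).
    { rewrite /u hy (hv i) minus_IZR. field. lra. }
    have hD : 1 <= Rabs (IZR (z i - a i)).
    { rewrite -abs_IZR. apply IZR_le. lia. }
    have hNm : NR / mR > kR.
    { rewrite /NR. have -> : (mR * kR + 1) / mR = kR + / mR by field; lra.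
      have := Rinv_0_lt_compat _ hmR. lra. }
    have ht : Rabs (u - v i) <= MQ + MP.
    { have := Rabs_triang u (- v i). rewrite Rabs_Ropp. rewrite /Rminus. lra. }
    rewrite e Rabs_mult (Rabs_pos_eq (NR / mR)) in ht; last lra.
    have := Rle_abs (MP + MQ). nra.
  + apply nQv. have -> : v = (fun i => y i - IZR (w i)); last done.
    apply functional_extensionality => i.
    rewrite hv hy.
    have -> : z i = a i by apply NNPP => hne; apply hno; exists i.
    done.
Qed.
End K.

Lemma half (d : nat) (P Q : region d) :
  rational_polytope P -> rational_polytope Q ->
  (forall (w : lattice_pt d) (s : R), 0 < s ->
     exists n : nat,
       ehrhart_value (translate P w) s n /\ ehrhart_value (translate Q w) s n) ->
  forall x : point d, P x -> Q x.
Proof.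
move=> [VP [HVP HPe]] [VQ [HVQ HQe]] H x Px.
apply HQe. apply: (@hull_sub d VQ VP); last by apply HPe.
move=> v hin. apply HQe. apply NNPP => nQv.
have [j [hj ej]] := In_nth VP v (fun _ => 0) hin.
have Pv : P v by apply HPe; rewrite -ej; apply hull_vertex.
have [m [a [hm Ha]]] := @common_den d v (HVP v hin).
have [MP HMP] := @hull_bound d VP.
have [MQ HMQ] := @hull_bound d VQ.
have [w [s [hs [hPa hQ]]]] := @key d P Q v m a MP MQ Pv nQv hm Ha (fun i => HMP v i (proj1 (HPe v) Pv))
  (fun y i hy => HMQ y i (proj1 (HQe y) hy)).
have [n [[l [_ [hl ln]]] [l' [_ [hl' ln']]]]] := H w s hs.
case: l' hl' ln' => [|z l'] hl' ln'.
- case: l hl ln => [|z l] hl ln.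
  + by apply (proj2 (hl a) hPa).
  + simpl in ln, ln'. lia.
- by apply (hQ z); apply hl'; left.
Qed.

Theorem theorem2 (d : nat) (P Q : region d) :
  rational_polytope P -> rational_polytope Q ->
  (forall (w : lattice_pt d) (s : R), 0 < s ->
     exists n : nat,
       ehrhart_value (translate P w) s n /\ ehrhart_value (translate Q w) s n) ->
  forall x : point d, P x <-> Q x.
Proof.
move=> hP hQ H x. split; first by apply half.
apply half => // w s hs. have [n [h1 h2]] := H w s hs. by exists n.
Qed.
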